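(* Let $S_j$ be local potentials satisfying (A)–(E), let $\omega\in\mathbb{R}^d\setminus\mathbb{Q}^d$, and let $x$ be a Birkhoff global minimizer with rotation vector $\omega$ such that $\tau_{k,l}x=x$ whenever $\langle\omega,k\rangle+l=0$. Then the recurrent set $\mathcal{M}(x)$ is, in the topology of pointwise convergence, either connected or a Cantor set (closed, perfect and totally disconnected).
   Context: Notation: $\|i\|=\sum_{k=1}^d|i_k|$, $B_j^r=\{k:\|k-j\|\le r\}$, $(\tau_{k,l}x)_i=x_{i+k}+l$. Local potentials $S_j:\mathbb{R}^{\mathbb{Z}^d}\to\mathbb{R}$, $j\in\mathbb{Z}^d$, satisfy: (A) there is $r\in(0,\infty)$ and $C^2$ functions $s_j:\mathbb{R}^{B_j^r}\to\mathbb{R}$ with $S_j(x)=s_j(x|_{B_j^r})$; (B) $S_j(\tau_{k,l}x)=S_{j+k}(x)$; (C) each $S_j$ is bounded below and $S_j(x)\to\infty$ as $|x_k-x_j|\to\infty$ whenever $\|k-j\|=1$; (D) $\partial_{i,k}S_j\le0$ for $i\ne k$, and $\partial_{i,k}S_i<0$ when $\|i-k\|=1$; (E) $|\partial_{i,k}S_j|\le C$ uniformly. Birkhoff: for every $(k,l)$, $\tau_{k,l}x\ge x$ or $\tau_{k,l}x\le x$ (pointwise order). Rotation vector $\omega$: $\lim_n x_{ni}/n=\langle\omega,i\rangle$ for all $i$. For finite $B$: $W_B=\sum_{j\in B}S_j$, $\mathring{B}^{(r)}=\{i\in B:B_i^r\subset B\}$; $x$ is a global minimizer if $W_B(x+y)\ge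 W_B(x)$ for all finite $B$ and all $y$ supported in $\mathring{B}^{(r)}$. $\widetilde{\mathcal{M}}(x)$ is the closure (in the topology of pointwise convergence) of $\{\tau_{k,l}x:(k,l)\in\mathbb{Z}^d\times\mathbb{Z}\}$, and $\mathcal{M}(x)=\{y\in\widetilde{\mathcal{M}}(x): y=\lim_{n\to\infty}\tau_{k_n,l_n}y\text{ pointwise for some sequence }(k_n,l_n)\text{ with }\langle\omega,k_n\rangle+l_n\ne0\}$. *)

(* Defs.v *)
From Stdlib Require Import Reals ZArith List Lra Lia.
Open Scope R_scope.

(* A point of Z^d is a Z-valued sequence vanishing from index d on;
   coordinates 0..d-1 are the genuine ones. *)
Definition pt (d : nat) := {v : nat -> Z | forall m, (d <= m)%nat -> v m = 0%Z}.

Definition coord {d} (p : pt d) (m : nat) : Z := proj1_sig p m.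

Definition padd {d} (p q : pt d) : pt d.
Proof.
  refine (exist _ (fun m => (coord p m + coord q m)%Z) _).
  intros m Hm; unfold coord; rewrite (proj2_sig p m Hm), (proj2_sig q m Hm); reflexivity.
Defined.

Definition psub {d} (p q : pt d) : pt d.
Proof.
  refine (exist _ (fun m => (coord p m - coord q m)%Z) _).
  intros m Hm; unfold coord; rewrite (proj2_sig p m Hm), (proj2_sig q m Hm); reflexivity.
Defined.

Definition pscale {d} (n : nat) (p : pt d) : pt d.
Proof.
  refine (exist _ (fun m => (Z.of_nat n * coord p m)%Z) _).
  intros m Hm; unfold coord; rewrite (proj2_sig p m Hm); lia.
Defined.

Fixpoint zsum (f : nat -> Z) (n : nat) : Z :=
  match n with O => 0%Z | S n' => (zsum f n' + f n')%Z end.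

Fixpoint rsum (f : nat -> R) (n : nat) : R :=
  match n with O => 0 | S n' => rsum f n' + f n' end.

Definition norm1 {d} (p : pt d) : Z := zsum (fun m => Z.abs (coord p m)) d.

Definition ball {d} (r : R) (j k : pt d) : Prop := IZR (norm1 (psub k j)) <= r.

Fixpoint agree_upto (f g : nat -> Z) (n : nat) : bool :=
  match n with O => true | S n' => andb (agree_upto f g n') (Z.eqb (f n') (g n')) end.
Definition pt_eqb {d} (p q : pt d) : bool := agree_upto (coord p) (coord q) d.

Definition config (d : nat) := pt d -> R.

Definition tau {d} (k : pt d) (l : Z) (x : config d) : config d :=
  fun i => x (padd i k) + IZR l.

(* <omega, k> ; omega in R^d given by its first d components *)
Definition dot {d} (omega : nat -> R) (k : pt d) : R :=
  rsum (fun m => omega m * IZR (coord k m)) d.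

Definition upd {d} (x : config d) (i : pt d) (t : R) : config d :=
  fun k => if pt_eqb k i then t else x k.

Definition has_partial {d} (F : config d -> R) (i : pt d) (G : config d -> R) : Prop :=
  forall x, derivable_pt_lim (fun t => F (upd x i t)) (x i) (G x).

(* continuity as a function of the coordinates in B (i.e. on R^B) *)
Definition cont_on {d} (B : pt d -> Prop) (G : config d -> R) : Prop :=
  forall x eps, 0 < eps -> exists delta, 0 < delta /\
    forall y, (forall k, B k -> Rabs (y k - x k) < delta) -> Rabs (G y - G x) < eps.

(* (A): locality with range r, and s_j of class C^2 on R^{B_j^r};
   D1 j i = d_i S_j,  D2 j i k = d_{i,k} S_j *)
Definition condA {d} (r : R) (S : pt d -> config d -> R)
  (D1 : pt d -> pt d -> config d -> R) (D2 : pt d -> pt d -> pt d -> config d -> R) : Prop :=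
  0 < r /\
  (forall j x y, (forall k, ball r j k -> x k = y k) -> S j x = S j y) /\
  (forall j i, has_partial (S j) i (D1 j i)) /\
  (forall j i k, has_partial (D1 j i) k (D2 j i k)) /\
  (forall j, cont_on (ball r j) (S j)) /\
  (forall j i, cont_on (ball r j) (D1 j i)) /\
  (forall j i k, cont_on (ball r j) (D2 j i k)).

Definition condB {d} (S : pt d -> config d -> R) : Prop :=
  forall j k l x, S j (tau k l x) = S (padd j k) x.

Definition condC {d} (S : pt d -> config d -> R) : Prop :=
  (forall j, exists m, forall x, m <= S j x) /\
  (forall j k, norm1 (psub k j) = 1%Z ->
     forall M, exists Rb, forall x, Rabs (x k - x j) > Rb -> S j x > M).

Definition condD {d} (D2 : pt d -> pt d -> pt d -> config d -> R) : Prop :=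
  (forall j i k x, i <> k -> D2 j i k x <= 0) /\
  (forall i k x, norm1 (psub i k) = 1%Z -> D2 i i k x < 0).

Definition condE {d} (D2 : pt d -> pt d -> pt d -> config d -> R) : Prop :=
  exists C, forall j i k x, Rabs (D2 j i k x) <= C.

(* W_B(x) for a finite set B given as a duplicate-free list *)
Definition W {d} (S : pt d -> config d -> R) (B : list (pt d)) (x : config d) : R :=
  fold_right (fun j acc => S j x + acc) 0 B.

Definition interior {d} (r : R) (B : list (pt d)) (i : pt d) : Prop :=
  In i B /\ forall k, ball r i k -> In k B.

Definition global_minimizer {d} (r : R) (S : pt d -> config d -> R) (x : config d) : Prop :=
  forall (B : list (pt d)) (y : config d), NoDup B ->
    (forall i, y i <> 0 -> interior r B i) ->
    W S B (fun i => x i + y i) >= W S B x.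

Definition birkhoff {d} (x : config d) : Prop :=
  forall k l, (forall i, tau k l x i >= x i) \/ (forall i, tau k l x i <= x i).

Definition has_rotation_vector {d} (x : config d) (omega : nat -> R) : Prop :=
  forall i, Un_cv (fun n => x (pscale n i) / INR n) (dot omega i).

Definition is_rational (a : R) : Prop := exists p q : Z, q <> 0%Z /\ a = IZR p / IZR q.
Definition not_in_Qd (d : nat) (omega : nat -> R) : Prop :=
  exists m, (m < d)%nat /\ ~ is_rational (omega m).

Definition nbhd {d} (x : config d) (F : list (pt d)) (eps : R) (y : config d) : Prop :=
  forall i, In i F -> Rabs (y i - x i) < eps.

Definition is_open {d} (U : config d -> Prop) : Prop :=
  forall x, U x -> exists F eps, 0 < eps /\ forall y, nbhd x F eps y -> U y.

Definition is_closed {d} (A : config d -> Prop) : Prop :=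
  is_open (fun x => ~ A x).

Definition closure {d} (A : config d -> Prop) (y : config d) : Prop :=
  forall F eps, 0 < eps -> exists z, A z /\ nbhd y F eps z.

Definition connected {d} (A : config d -> Prop) : Prop :=
  ~ exists U V, is_open U /\ is_open V /\
      (forall x, A x -> U x \/ V x) /\
      (exists x, A x /\ U x) /\ (exists x, A x /\ V x) /\
      (forall x, A x -> U x -> V x -> False).

Definition perfect {d} (A : config d -> Prop) : Prop :=
  is_closed A /\
  forall x, A x -> forall F eps, 0 < eps -> exists y, A y /\ y <> x /\ nbhd x F eps y.

Definition totally_disconnected {d} (A : config d -> Prop) : Prop :=
  forall C : config d -> Prop, (forall x, C x -> A x) -> connected C ->
    forall x y, C x -> C y -> x = y.

Definition cantor_set {d} (A : config d -> Prop) : Prop :=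
  is_closed A /\ perfect A /\ totally_disconnected A.

Definition Mtilde {d} (x : config d) : config d -> Prop :=
  closure (fun y => exists k l, y = tau k l x).

Definition Mrec {d} (omega : nat -> R) (x : config d) : config d -> Prop :=
  fun y => Mtilde x y /\
    exists (ks : nat -> pt d) (ls : nat -> Z),
      (forall n, dot omega (ks n) + IZR (ls n) <> 0) /\
      (forall i, Un_cv (fun n => tau (ks n) (ls n) y i) (y i)).

(* Main.v *)
Require Import Defs.
From Stdlib Require Import Reals ZArith List Lra Lia.
From Stdlib Require Import FunctionalExtensionality ProofIrrelevance IndefiniteDescription Classical.
Open Scope R_scope.

Lemma pt_ext {d} (p q : pt d) : (forall m, coord p m = coord q m) -> p = q.
Proof.
  destruct p as [f Hf], q as [g Hg]; unfold coord; simpl; intros H.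
  assert (f = g) by (apply functional_extensionality; exact H). subst g.
  f_equal; apply proof_irrelevance.
Qed.

Definition pzero {d} : pt d.
Proof. refine (exist _ (fun _ => 0%Z) _). intros; reflexivity. Defined.

Definition zscale {d} (z : Z) (p : pt d) : pt d.
Proof.
  refine (exist _ (fun m => (z * coord p m)%Z) _).
  intros m Hm; unfold coord; rewrite (proj2_sig p m Hm); lia.
Defined.

Definition pe (d m : nat) : pt d.
Proof.
  refine (exist _ (fun j => if andb (Nat.ltb j d) (Nat.eqb j m) then 1%Z else 0%Z) _).
  intros j Hj. destruct (Nat.ltb_spec j d); [lia|reflexivity].
Defined.

Lemma coord_pscale {d} n (k : pt d) m : coord (pscale n k) m = (Z.of_nat n * coord k m)%Z.
Proof. reflexivity. Qed.
Lemma coord_padd {d} (a b : pt d) m : coord (padd a b) m = (coord a m + coord b m)%Z.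
Proof. reflexivity. Qed.
Lemma coord_psub {d} (a b : pt d) m : coord (psub a b) m = (coord a m - coord b m)%Z.
Proof. reflexivity. Qed.
Lemma coord_pzero {d} m : coord (@pzero d) m = 0%Z.
Proof. reflexivity. Qed.
Lemma coord_zscale {d} z (a : pt d) m : coord (zscale z a) m = (z * coord a m)%Z.
Proof. reflexivity. Qed.
Ltac crw := intro; repeat rewrite ?coord_padd, ?coord_psub, ?coord_pscale, ?coord_pzero, ?coord_zscale; lia.
Lemma padd_assoc {d} (a b c : pt d) : padd (padd a b) c = padd a (padd b c).
Proof. apply pt_ext; crw. Qed.
Lemma padd_comm {d} (a b : pt d) : padd a b = padd b a.
Proof. apply pt_ext; crw. Qed.
Lemma padd_zero {d} (a : pt d) : padd a pzero = a.
Proof. apply pt_ext; crw. Qed.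
Lemma padd_psub {d} (a b : pt d) : padd (psub a b) b = a.
Proof. apply pt_ext; crw. Qed.
Lemma padd_psub2 {d} (i a b : pt d) : padd (padd i a) (psub b a) = padd i b.
Proof. apply pt_ext; crw. Qed.
Lemma pscale_S {d} n (k : pt d) : pscale (S n) k = padd (pscale n k) k.
Proof. apply pt_ext; intro m; rewrite coord_padd, !coord_pscale; lia. Qed.

Lemma rsum_ext f g n : (forall m, (m < n)%nat -> f m = g m) -> rsum f n = rsum g n.
Proof. induction n; simpl; intros H; [reflexivity|]. rewrite IHn by (intros; apply H; lia). rewrite H by lia. reflexivity. Qed.
Lemma rsum_plus f g n : rsum (fun m => f m + g m) n = rsum f n + rsum g n.
Proof. induction n; simpl; [lra|]. rewrite IHn; lra. Qed.
Lemma rsum_scal c f n : rsum (fun m => c * f m) n = c * rsum f n.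
Proof. induction n; simpl; [lra|]. rewrite IHn; lra. Qed.
Lemma rsum_zero n : rsum (fun _ => 0) n = 0.
Proof. induction n; simpl; [lra|]. rewrite IHn; lra. Qed.

Lemma dot_padd {d} om (a b : pt d) : dot om (padd a b) = dot om a + dot om b.
Proof. unfold dot. rewrite <- rsum_plus. apply rsum_ext; intros m _. rewrite coord_padd, plus_IZR. ring. Qed.
Lemma rsum_minus f g n : rsum (fun m => f m - g m) n = rsum f n - rsum g n.
Proof. induction n; simpl; [lra|]. rewrite IHn; lra. Qed.
Lemma dot_psub {d} om (a b : pt d) : dot om (psub a b) = dot om a - dot om b.
Proof. unfold dot. rewrite <- rsum_minus. apply rsum_ext; intros m _. rewrite coord_psub, minus_IZR. ring. Qed.
Lemma dot_zscale {d} om z (a : pt d) : dot om (zscale z a) = IZR z * dot om a.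
Proof. unfold dot. rewrite <- rsum_scal. apply rsum_ext; intros m _. rewrite coord_zscale, mult_IZR. ring. Qed.
Lemma dot_pzero {d} om : dot om (@pzero d) = 0.
Proof. unfold dot. rewrite <- (rsum_zero d). apply rsum_ext; intros m _. rewrite coord_pzero. ring. Qed.
Lemma rsum_S f n : rsum f (S n) = rsum f n + f n.
Proof. reflexivity. Qed.
Lemma dot_pe {d} om m : (m < d)%nat -> dot om (pe d m) = om m.
Proof.
  intros Hm. unfold dot.
  assert (forall n, (n <= d)%nat -> rsum (fun j => om j * IZR (coord (pe d m) j)) n = if Nat.ltb m n then om m else 0).
  { induction n; intros Hn; [reflexivity|]. rewrite rsum_S, IHn by lia. unfold coord; simpl.
    destruct (Nat.ltb_spec n d); [|lia]. destruct (Nat.eqb_spec n m); destruct (Nat.ltb_spec m n); destruct (Nat.ltb_spec m (S n)); simpl; try lia; try lra. subst; lra. }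
  rewrite H by lia. destruct (Nat.ltb_spec m d); lia || reflexivity.
Qed.


Lemma cv_le_lim u v a b : Un_cv u a -> Un_cv v b -> (forall n, (1 <= n)%nat -> u n <= v n) -> a <= b.
Proof.
  intros Hu Hv H. destruct (Rle_or_lt a b) as [|Hab]; [assumption|exfalso].
  destruct (Hu ((a-b)/2)) as [N1 H1]; [lra|]. destruct (Hv ((a-b)/2)) as [N2 H2]; [lra|].
  specialize (H1 (S (N1+N2)) ltac:(lia)). specialize (H2 (S (N1+N2)) ltac:(lia)).
  specialize (H (S (N1+N2)) ltac:(lia)). unfold R_dist in *.
  apply Rabs_def2 in H1. apply Rabs_def2 in H2. lra.
Qed.

Lemma cv_div_const c : Un_cv (fun n => c / INR n) 0.
Proof.
  intros eps He. destruct (archimed (Rabs c / eps)) as [H1 _].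
  assert (0 <= Rabs c / eps) by (unfold Rdiv; apply Rmult_le_pos; [apply Rabs_pos|apply Rlt_le, Rinv_0_lt_compat; lra]).
  assert (Hup : (0 < up (Rabs c / eps))%Z) by (apply lt_IZR; lra).
  exists (S (Z.to_nat (up (Rabs c / eps)))). intros n Hn. unfold R_dist.
  assert (HN : IZR (up (Rabs c / eps)) < INR n).
  { rewrite <- (Z2Nat.id (up _)) by lia. rewrite <- INR_IZR_INZ. apply lt_INR. lia. }
  assert (0 < INR n) by lra.
  assert (Hc : Rabs c < eps * INR n).
  { assert (Rabs c / eps < INR n) by lra. apply Rmult_lt_reg_r with (/eps). apply Rinv_0_lt_compat; lra.
    replace (eps * INR n * / eps) with (INR n) by (field; lra). exact H2. }
  rewrite Rminus_0_r. unfold Rdiv. rewrite Rabs_mult, Rabs_inv, (Rabs_right (INR n)) by lra.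
  apply Rmult_lt_reg_r with (INR n); [lra|]. rewrite Rmult_assoc, Rinv_l by lra. lra.
Qed.

Lemma cv_plus_const u a c : Un_cv u a -> Un_cv (fun n => u n + c) (a + c).
Proof. intros H eps He. destruct (H eps He) as [N HN]. exists N. intros n Hn. unfold R_dist in *.
  replace (u n + c - (a + c)) with (u n - a) by ring. auto. Qed.

Lemma cv_list {T} (u : T -> nat -> R) (a : T -> R) (F : list T) (eps : R) :
  (forall i, Un_cv (u i) (a i)) -> 0 < eps ->
  exists N, forall n, (N <= n)%nat -> forall i, In i F -> Rabs (u i n - a i) < eps.
Proof.
  intros H He. induction F as [|j F IH].
  - exists O. intros n _ i [].
  - destruct IH as [N1 H1]. destruct (H j eps He) as [N2 H2]. exists (N1 + N2)%nat.
    intros n Hn i [<-|Hi]. apply H2; lia. apply H1; [lia|assumption].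
Qed.

Lemma interval_connected (a b : R) (P Q : R -> Prop) : a < b ->
  (forall t, P t -> exists dl, 0 < dl /\ forall t', Rabs (t' - t) < dl -> P t') ->
  (forall t, Q t -> exists dl, 0 < dl /\ forall t', Rabs (t' - t) < dl -> Q t') ->
  (forall t, a <= t <= b -> P t \/ Q t) ->
  (forall t, a <= t <= b -> P t -> Q t -> False) ->
  P a -> Q b -> False.
Proof.
  intros Hab HP HQ Hcov Hdis Pa Qb.
  set (E := fun t => a <= t <= b /\ forall t', a <= t' <= t -> P t').
  assert (Eb : bound E) by (exists b; intros t [Ht _]; lra).
  assert (Ea : exists t, E t) by (exists a; split; [lra|intros t' Ht'; replace t' with a by lra; exact Pa]).
  destruct (completeness E Eb Ea) as [c [Hc1 Hc2]].
  assert (Hac : a <= c) by (apply Hc1; destruct Ea as [t Et]; unfold E; split; [lra|]; intros t' Ht'; replace t' with a by lra; exact Pa).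
  assert (Hcb : c <= b) by (apply Hc2; intros t [Ht _]; lra).
  assert (Hbelow : forall t', a <= t' < c -> P t').
  { intros t' Ht'. destruct (classic (exists e, E e /\ t' <= e)) as [[e [[He1 He2] He3]]|Hn].
    - apply He2; lra.
    - exfalso. assert (c <= t'); [|lra]. apply Hc2. intros e Ee. destruct (Rle_or_lt e t'); [lra|].
      exfalso; apply Hn; exists e; split; [assumption|lra]. }
  destruct (Hcov c (conj Hac Hcb)) as [Pc|Qc].
  - destruct (HP c Pc) as [dl [Hdl Hd]].
    destruct (Req_dec c b) as [->|Hcb'].
    + exact (Hdis b ltac:(lra) Pc Qb).
    + set (t1 := Rmin (c + dl/2) b).
      assert (E t1).
      { unfold t1; split. split; [unfold Rmin; destruct (Rle_dec (c+dl/2) b); lra|apply Rmin_r].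
        intros t' Ht'. destruct (Rlt_or_le t' c). apply Hbelow; lra. apply Hd.
        assert (t' <= c + dl/2) by (pose proof (Rmin_l (c+dl/2) b); lra). apply Rabs_def1; lra. }
      assert (t1 <= c) by (apply Hc1; assumption).
      unfold t1 in H0. unfold Rmin in H0. destruct (Rle_dec (c+dl/2) b); lra.
  - destruct (HQ c Qc) as [dl [Hdl Hd]].
    destruct (Req_dec c a) as [->|Hca]. exact (Hdis a ltac:(lra) Pa Qc).
    set (t1 := Rmax a (c - dl/2)).
    assert (Ht1 : a <= t1 < c) by (unfold t1, Rmax; destruct (Rle_dec a (c-dl/2)); lra).
    apply (Hdis t1). lra. apply Hbelow; lra. apply Hd. apply Rabs_def1; unfold t1, Rmax in *; destruct (Rle_dec a (c-dl/2)); lra.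
Qed.


Section Main.
Variable d : nat.
Variable x : config d.
Variable omega : nat -> R.
Hypothesis hbirk : birkhoff x.
Hypothesis hrot : has_rotation_vector x omega.
Hypothesis hsym : forall k l, dot omega k + IZR l = 0 -> forall i, tau k l x i = x i.
Hypothesis homega : not_in_Qd d omega.

Definition G := (pt d * Z)%type.
Definition Xg (g : G) : config d := tau (fst g) (snd g) x.
Definition th (g : G) : R := dot omega (fst g) + IZR (snd g).
Definition gsub (g h : G) : G := (psub (fst g) (fst h), (snd g - snd h)%Z).
Definition gz (z : Z) (g : G) : G := (zscale z (fst g), (z * snd g)%Z).
Definition cle (y z : config d) := forall i, y i <= z i.

Lemma th_sub g h : th (gsub g h) = th g - th h.
Proof. unfold th, gsub; simpl. rewrite dot_psub, minus_IZR. ring. Qed.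
Lemma th_z z g : th (gz z g) = IZR z * th g.
Proof. unfold th, gz; simpl. rewrite dot_zscale, mult_IZR. ring. Qed.
Lemma th_l l : th (pzero, l) = IZR l.
Proof. unfold th; simpl. rewrite dot_pzero. ring. Qed.
Lemma th_e m : (m < d)%nat -> th (pe d m, 0%Z) = omega m.
Proof. intros; unfold th; simpl. rewrite dot_pe by assumption. ring. Qed.

Lemma Xg_shift g h i : Xg h i = Xg (gsub h g) (padd i (fst g)) + IZR (snd g).
Proof. unfold Xg, gsub, tau; simpl. rewrite padd_psub2, minus_IZR. ring. Qed.
Lemma Xg_l l i : Xg (pzero, l) i = x i + IZR l.
Proof. unfold Xg, tau; simpl. rewrite padd_zero. reflexivity. Qed.

Lemma key_pos g : th g > 0 -> ~ cle (Xg g) x.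
Proof.
  destruct g as [k l]. unfold th, cle, Xg, tau; simpl. intros Hpos H.
  set (c0 := x (pscale 0 k)).
  assert (Hind : forall n, x (pscale n k) + INR n * IZR l <= c0).
  { induction n. simpl. unfold c0; lra.
    rewrite pscale_S, S_INR. specialize (H (pscale n k)). lra. }
  assert (dot omega k <= 0 - IZR l).
  { apply (cv_le_lim (fun n => x (pscale n k) / INR n) (fun n => c0 / INR n - IZR l)).
    apply hrot. apply (cv_plus_const _ _ (- IZR l)). apply cv_div_const.
    intros n Hn. assert (0 < INR n) by (apply lt_0_INR; lia). specialize (Hind n).
    apply Rmult_le_reg_r with (INR n); [assumption|]. unfold Rdiv.
    rewrite Rmult_minus_distr_r, !Rmult_assoc, Rinv_l by lra. lra. }
  lra.
Qed.

Lemma Xstrict g h : th g < th h -> cle (Xg g) (Xg h) /\ ~ cle (Xg h) (Xg g).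
Proof.
  intros Hlt. set (e := gsub h g). assert (He : th e > 0) by (unfold e; rewrite th_sub; lra).
  pose proof (key_pos e He) as Hk.
  assert (Hge : forall j, x j <= Xg e j).
  { destruct (hbirk (fst e) (snd e)) as [H|H]. intros j; specialize (H j); unfold Xg; lra.
    exfalso; apply Hk; intros j; specialize (H j); unfold Xg; lra. }
  split.
  - intros i. rewrite (Xg_shift g h i). fold e. unfold Xg at 1; unfold tau.
    specialize (Hge (padd i (fst g))). lra.
  - intros Hc. apply Hk. intros j. specialize (Hc (psub j (fst g))).
    rewrite (Xg_shift g h) in Hc. fold e in Hc. rewrite padd_psub in Hc.
    change (Xg g (psub j (fst g))) with (x (padd (psub j (fst g)) (fst g)) + IZR (snd g)) in Hc.
    rewrite padd_psub in Hc. lra.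
Qed.

Lemma Xeq g h : th g = th h -> forall i, Xg g i = Xg h i.
Proof.
  intros Heq i. rewrite (Xg_shift g h i). set (e := gsub h g).
  assert (th e = 0) by (unfold e; rewrite th_sub; lra).
  pose proof (hsym (fst e) (snd e) H (padd i (fst g))). 
  change (Xg e (padd i (fst g))) with (tau (fst e) (snd e) x (padd i (fst g))). rewrite H0.
  unfold Xg, tau. reflexivity.
Qed.

Lemma Xle g h : th g <= th h -> cle (Xg g) (Xg h).
Proof.
  intros H. destruct (Rle_lt_or_eq_dec _ _ H). apply Xstrict; assumption.
  intros i. rewrite (Xeq g h e i). lra.
Qed.

Lemma Xcomp g h : cle (Xg g) (Xg h) \/ cle (Xg h) (Xg g).
Proof. destruct (Rle_or_lt (th g) (th h)); [left|right]; apply Xle; lra. Qed.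


Lemma small eps : 0 < eps -> exists g, 0 < th g < eps.
Proof.
  intros He. apply NNPP; intro Hn.
  assert (Hge : forall g, th g > 0 -> th g >= eps).
  { intros g Hg. destruct (Rlt_or_le (th g) eps); [|lra]. exfalso; apply Hn; exists g; lra. }
  set (E := fun r => exists g, th g > 0 /\ r = - th g).
  assert (Eb : bound E) by (exists (-eps); intros r [g [Hg ->]]; specialize (Hge g Hg); lra).
  assert (Ene : exists r, E r) by (exists (- th (pzero, 1%Z)); exists (pzero, 1%Z); split; [rewrite th_l; lra|reflexivity]).
  destruct (completeness E Eb Ene) as [m [Hm1 Hm2]].
  assert (Hmeps : m <= - eps) by (apply Hm2; intros r [g [Hg ->]]; specialize (Hge g Hg); lra).
  set (c := - m).
  assert (Hlow : forall g, th g > 0 -> c <= th g) by (intros g Hg; assert (- th g <= m) by (apply Hm1; exists g; split; [assumption|reflexivity]); unfold c; lra).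
  assert (Hatt : exists gs, th gs = c).
  { apply NNPP; intro Hna.
    assert (Hne : forall g, th g <> c) by (intros g Heq; apply Hna; exists g; exact Heq).
    assert (exists g2, th g2 > 0 /\ th g2 < c + eps) as [g2 [Hg2a Hg2b]].
    { apply NNPP; intro H2. assert (m <= m - eps); [|lra]. apply Hm2. intros r [g [Hg ->]].
      destruct (Rlt_or_le (th g) (c + eps)). exfalso; apply H2; exists g; split; assumption. unfold c in *; lra. }
    pose proof (Hlow g2 Hg2a). pose proof (Hne g2).
    assert (exists g1, th g1 > 0 /\ th g1 < th g2) as [g1 [Hg1a Hg1b]].
    { apply NNPP; intro H2. assert (m <= - th g2); [|unfold c in *; lra]. apply Hm2. intros r [g [Hg ->]].
      destruct (Rlt_or_le (th g) (th g2)). exfalso; apply H2; exists g; split; assumption. lra. }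
    pose proof (Hlow g1 Hg1a).
    apply Hn. exists (gsub g2 g1). rewrite th_sub. lra. }
  destruct Hatt as [gs Hgs].
  assert (Hc : 0 < c) by (unfold c; lra).
  assert (Hmult : forall h, exists n, th h = IZR n * c).
  { intros h. destruct (archimed (th h / c)) as [A1 A2]. exists (up (th h / c) - 1)%Z.
    set (q := th h / c) in *. assert (Hq : th h = q * c) by (unfold q; field; lra).
    set (r := th (gsub h (gz (up q - 1) gs))).
    assert (Hr : r = th h - IZR (up q - 1) * c) by (unfold r; rewrite th_sub, th_z, Hgs; reflexivity).
    rewrite minus_IZR in Hr. 
    assert (0 <= r < c) by (rewrite Hr, Hq; split; nra).
    destruct (Rlt_or_le 0 r). pose proof (Hlow _ H0). fold r in H1. lra.
    rewrite minus_IZR. lra. }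
  destruct homega as [mm [Hmm Hirr]]. apply Hirr.
  destruct (Hmult (pzero, 1%Z)) as [n1 Hn1]. destruct (Hmult (pe d mm, 0%Z)) as [n2 Hn2].
  rewrite th_l in Hn1. rewrite th_e in Hn2 by assumption.
  assert (IZR n1 <> 0) by (intro Hz; rewrite Hz in Hn1; lra).
  exists n2, n1. split. intro Hz; subst n1; apply H; reflexivity.
  rewrite Hn2. apply (Rmult_eq_reg_r (IZR n1)); [|assumption]. 
  replace (IZR n2 / IZR n1 * IZR n1) with (IZR n2) by (field; assumption).
  rewrite Rmult_assoc, (Rmult_comm c), <- Hn1. ring.
Qed.

Lemma dense a b : a < b -> exists g, a < th g < b.
Proof.
  intros Hab. destruct (small (b - a)) as [g0 [H0 H1]]; [lra|].
  set (t0 := th g0) in *. destruct (archimed (a / t0)) as [A1 A2].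
  set (q := a / t0) in *. assert (Hq : a = q * t0) by (unfold q; field; lra).
  exists (gz (up q) g0). rewrite th_z. fold t0. split; nra.
Qed.


Definition MT := Mtilde x.
Definition Ph (y : config d) (s : R) :=
  (forall g, th g < s -> cle (Xg g) y) /\ (forall g, s < th g -> cle y (Xg g)).

Lemma MT_X g : MT (Xg g).
Proof.
  intros F eps He. exists (Xg g). split. exists (fst g), (snd g). reflexivity.
  intros i _. rewrite Rminus_diag, Rabs_R0. lra.
Qed.

Lemma MT_closed y : (forall F eps, 0 < eps -> exists z, MT z /\ nbhd y F eps z) -> MT y.
Proof.
  intros H F eps He. destruct (H F (eps/2)) as [z [Hz1 Hz2]]; [lra|].
  destruct (Hz1 F (eps/2)) as [w [Hw1 Hw2]]; [lra|]. exists w. split; [assumption|].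
  intros i Hi. specialize (Hz2 i Hi). specialize (Hw2 i Hi).
  apply Rabs_def2 in Hz2. apply Rabs_def2 in Hw2. apply Rabs_def1; lra.
Qed.

Lemma MT_approx y F eps : MT y -> 0 < eps -> exists g, nbhd y F eps (Xg g).
Proof.
  intros Hy He. destruct (Hy F eps He) as [z [[k [l ->]] Hz]]. exists (k, l). exact Hz.
Qed.

Lemma MT_comp y z : MT y -> MT z -> cle y z \/ cle z y.
Proof.
  intros Hy Hz. destruct (classic (cle y z)) as [H|H]; [left; assumption|right].
  apply not_all_ex_not in H. destruct H as [j Hj]. apply Rnot_le_lt in Hj.
  intros i. apply Rnot_lt_le. intro Hi.
  set (eps := Rmin (z i - y i) (y j - z j) / 2).
  assert (He : 0 < eps) by (unfold eps, Rmin; destruct (Rle_dec (z i - y i) (y j - z j)); lra).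
  assert (He1 : 2*eps <= z i - y i) by (unfold eps in *; pose proof (Rmin_l (z i - y i) (y j - z j)); lra).
  assert (He2 : 2*eps <= y j - z j) by (unfold eps in *; pose proof (Rmin_r (z i - y i) (y j - z j)); lra).
  destruct (MT_approx y (i :: j :: nil) eps Hy He) as [g Hg].
  destruct (MT_approx z (i :: j :: nil) eps Hz He) as [h Hh].
  pose proof (Hg i ltac:(simpl; auto)) as Hgi. pose proof (Hg j ltac:(simpl; auto)) as Hgj.
  pose proof (Hh i ltac:(simpl; auto)) as Hhi. pose proof (Hh j ltac:(simpl; auto)) as Hhj.
  apply Rabs_def2 in Hgi, Hgj, Hhi, Hhj.
  destruct (Xcomp g h) as [C|C]. specialize (C j). lra. specialize (C i). lra.
Qed.

Lemma Ph_unique y s s' : Ph y s -> Ph y s' -> s = s'.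
Proof.
  intros [H1 H2] [H1' H2']. destruct (Rtotal_order s s') as [Hl|[Heq|Hl]]; [exfalso| assumption| exfalso].
  - destruct (dense s s' Hl) as [g [Hg1 Hg2]]. destruct (dense (th g) s' Hg2) as [h [Hh1 Hh2]].
    destruct (Xstrict g h Hh1) as [_ Hn]. apply Hn. intros i.
    specialize (H1' h Hh2 i). specialize (H2 g Hg1 i). lra.
  - destruct (dense s' s Hl) as [g [Hg1 Hg2]]. destruct (dense (th g) s Hg2) as [h [Hh1 Hh2]].
    destruct (Xstrict g h Hh1) as [_ Hn]. apply Hn. intros i.
    specialize (H1 h Hh2 i). specialize (H2' g Hg1 i). lra.
Qed.

Lemma Ph_ext y z s : (forall i, y i = z i) -> Ph y s -> Ph z s.
Proof.
  intros E [H1 H2]. split; intros g Hg i. rewrite <- E. apply H1; assumption.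
  rewrite <- E. apply H2; assumption.
Qed.

Lemma Ph_X g : Ph (Xg g) (th g).
Proof. split; intros h Hh; apply Xle; lra. Qed.

Lemma Ph_exists y : MT y -> exists s, Ph y s.
Proof.
  intros Hy. set (p0 := @pzero d).
  destruct (archimed (y p0 - x p0)) as [A1 _]. destruct (archimed (x p0 - y p0)) as [B1 _].
  set (lu := up (y p0 - x p0)). set (ld := (- up (x p0 - y p0))%Z).
  set (E := fun t => exists g, t = th g /\ cle (Xg g) y).
  assert (Eb : bound E).
  { exists (IZR lu). intros t [g [-> Hg]]. destruct (Rle_or_lt (th g) (IZR lu)) as [|Hlt]; [assumption|exfalso].
    rewrite <- th_l in Hlt. destruct (Xstrict _ _ Hlt) as [C _]. specialize (C p0). specialize (Hg p0).
    rewrite Xg_l in C. fold lu in A1. lra. }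
  assert (Hd : cle (Xg (pzero, ld)) y).
  { destruct (MT_comp y (Xg (pzero, ld)) Hy (MT_X _)) as [C|C]; [|assumption].
    exfalso. specialize (C p0). rewrite Xg_l in C. unfold ld in C. rewrite opp_IZR in C. lra. }
  assert (Ene : exists t, E t) by (exists (th (pzero, ld)); exists (pzero, ld); split; [reflexivity|assumption]).
  destruct (completeness E Eb Ene) as [s [Hs1 Hs2]]. exists s. split.
  - intros g Hg. destruct (classic (exists e, E e /\ th g < e)) as [[e [[h [-> Hh]] He]]|Hn].
    + intros i. pose proof (Xle g h ltac:(lra) i). specialize (Hh i). lra.
    + exfalso. assert (s <= th g); [|lra]. apply Hs2. intros e Ee. apply Rnot_lt_le. intro; apply Hn; exists e; split; assumption.
  - intros g Hg. destruct (MT_comp y (Xg g) Hy (MT_X g)) as [C|C]; [assumption|].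
    exfalso. assert (th g <= s); [|lra]. apply Hs1. exists g. split; [reflexivity|assumption].
Qed.

Lemma Ph_mono y z s s' : cle y z -> Ph y s -> Ph z s' -> s <= s'.
Proof.
  intros Hyz [H1 H2] [H1' H2']. apply Rnot_lt_le. intro Hl.
  destruct (dense s' s Hl) as [g [Hg1 Hg2]]. destruct (dense (th g) s Hg2) as [h [Hh1 Hh2]].
  destruct (Xstrict g h Hh1) as [_ Hn]. apply Hn. intros i.
  specialize (H1 h Hh2 i). specialize (H2' g Hg1 i). specialize (Hyz i). lra.
Qed.

Lemma Ph_lt y z s s' : MT y -> MT z -> Ph y s -> Ph z s' -> s < s' -> cle y z.
Proof.
  intros Hy Hz Py Pz Hl. destruct (MT_comp y z Hy Hz) as [C|C]; [assumption|].
  pose proof (Ph_mono z y s' s C Pz Py). lra.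
Qed.

Lemma tau_comp k l k' l' (y : config d) : tau k l (tau k' l' y) = tau (padd k k') (l + l') y.
Proof.
  apply functional_extensionality; intro i. unfold tau. rewrite padd_assoc, plus_IZR. ring.
Qed.

Lemma tau_comm k l k' l' (y : config d) : tau k l (tau k' l' y) = tau k' l' (tau k l y).
Proof. rewrite !tau_comp, padd_comm, Z.add_comm. reflexivity. Qed.

Lemma MT_tau y k l : MT y -> MT (tau k l y).
Proof.
  intros Hy F eps He. destruct (Hy (map (fun i => padd i k) F) eps He) as [z [[k' [l' ->]] Hz]].
  exists (tau k l (tau k' l' x)). split.
  - rewrite tau_comp. eexists; eexists; reflexivity.
  - intros i Hi. unfold tau at 1. unfold tau at 2.
    replace (tau k' l' x (padd i k) + IZR l - (y (padd i k) + IZR l)) with (tau k' l' x (padd i k) - y (padd i k)) by ring.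
    apply Hz. apply (in_map (fun i => padd i k)). assumption.
Qed.

Lemma Ph_tau y s k l : Ph y s -> Ph (tau k l y) (s + th (k, l)).
Proof.
  intros [H1 H2]. split; intros h Hh i.
  - rewrite (Xg_shift (k, l) h i). unfold tau; simpl.
    assert (th (gsub h (k, l)) < s) by (rewrite th_sub; lra).
    specialize (H1 _ H (padd i k)). lra.
  - rewrite (Xg_shift (k, l) h i). unfold tau; simpl.
    assert (s < th (gsub h (k, l))) by (rewrite th_sub; lra).
    specialize (H2 _ H (padd i k)). lra.
Qed.

Lemma not_fixed y s k l : Ph y s -> th (k, l) <> 0 -> exists i, tau k l y i <> y i.
Proof.
  intros P Hne. apply NNPP; intro Hn.
  assert (E : forall i, tau k l y i = y i) by (intro i; apply NNPP; intro; apply Hn; exists i; assumption).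
  pose proof (Ph_ext _ _ _ E (Ph_tau y s k l P)). pose proof (Ph_unique y s _ P H). lra.
Qed.

Definition MR := Mrec omega x.

Lemma MR_MT y : MR y -> MT y.
Proof. intros [H _]. exact H. Qed.

Lemma MR_tau y k l : MR y -> MR (tau k l y).
Proof.
  intros [Hy [ks [ls [Hne Hcv]]]]. split. apply MT_tau; assumption.
  exists ks, ls. split; [assumption|]. intros i eps He.
  destruct (Hcv (padd i k) eps He) as [N HN]. exists N. intros n Hn. specialize (HN n Hn).
  rewrite tau_comm. unfold R_dist in *.
  change (tau k l (tau (ks n) (ls n) y) i - tau k l y i) with (tau (ks n) (ls n) y (padd i k) + IZR l - (y (padd i k) + IZR l)).
  replace (tau (ks n) (ls n) y (padd i k) + IZR l - (y (padd i k) + IZR l)) with (tau (ks n) (ls n) y (padd i k) - y (padd i k)) by ring.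
  exact HN.
Qed.

Lemma NR a b w s i j : MT a -> MT b -> MT w -> Ph a s -> Ph b s -> Ph w s ->
  a i < w i -> w j < b j -> ~ MR w.
Proof.
  intros Ha Hb Hw Pa Pb Pw Hi Hj [_ [ks [ls [Hne Hcv]]]].
  set (eps := Rmin (w i - a i) (b j - w j)).
  assert (He : 0 < eps) by (unfold eps, Rmin; destruct (Rle_dec (w i - a i) (b j - w j)); lra).
  assert (He1 : eps <= w i - a i) by apply Rmin_l.
  assert (He2 : eps <= b j - w j) by apply Rmin_r.
  destruct (cv_list (fun i n => tau (ks n) (ls n) w i) w (i :: j :: nil) eps Hcv He) as [N HN].
  pose proof (HN N (le_n N) i ltac:(simpl; auto)) as Ci. pose proof (HN N (le_n N) j ltac:(simpl; auto)) as Cj.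
  simpl in Ci, Cj. apply Rabs_def2 in Ci, Cj.
  pose proof (Ph_tau w s (ks N) (ls N) Pw) as PN. pose proof (MT_tau w (ks N) (ls N) Hw) as MN.
  specialize (Hne N). fold (th (ks N, ls N)) in Hne.
  destruct (Rtotal_order (th (ks N, ls N)) 0) as [Hl|[He0|Hg]].
  - pose proof (Ph_lt _ _ _ _ MN Ha PN Pa ltac:(lra) i). lra.
  - contradiction.
  - pose proof (Ph_lt _ _ _ _ Hb MN Pb PN ltac:(lra) j). lra.
Qed.


Lemma inv_small N n : (0 < N)%nat -> (N <= n)%nat -> / (INR n + 1) < / INR N.
Proof.
  intros HN Hn. assert (0 < INR N) by (apply lt_0_INR; assumption).
  assert (INR N <= INR n) by (apply le_INR; assumption).
  apply Rinv_lt_contravar; nra.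
Qed.

Lemma small_seq : exists gs : nat -> G, forall n, 0 < th (gs n) < / (INR n + 1).
Proof.
  assert (H : forall n, exists g, 0 < th g < / (INR n + 1)) by (intro n; apply small; apply RinvN_pos).
  exists (fun n => proj1_sig (constructive_indefinite_description _ (H n))).
  intro n. exact (proj2_sig (constructive_indefinite_description _ (H n))).
Qed.

Definition Uset t i := fun r => exists g, t < th g /\ r = - Xg g i.
Lemma Uset_bound t i : bound (Uset t i).
Proof.
  destruct (dense (t - 1) t ltac:(lra)) as [g0 [_ Hg0]]. exists (- Xg g0 i).
  intros r [g [Hg ->]]. pose proof (Xle g0 g ltac:(lra) i). lra.
Qed.
Lemma Uset_ne t i : exists r, Uset t i r.
Proof. destruct (dense t (t + 1) ltac:(lra)) as [g [Hg _]]. exists (- Xg g i), g. split; [lra|reflexivity]. Qed.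
Definition ut (t : R) : config d := fun i => - proj1_sig (completeness _ (Uset_bound t i) (Uset_ne t i)).

Lemma ut_lb t g i : t < th g -> ut t i <= Xg g i.
Proof.
  intros H. unfold ut. destruct (completeness _ _ _) as [m [Hm1 Hm2]]; simpl.
  assert (- Xg g i <= m) by (apply Hm1; exists g; split; [assumption|reflexivity]). lra.
Qed.
Lemma ut_approx t i e : 0 < e -> exists g, t < th g /\ Xg g i < ut t i + e.
Proof.
  intros He. unfold ut. destruct (completeness _ _ _) as [m [Hm1 Hm2]]; simpl.
  apply NNPP; intro Hn. assert (m <= m - e); [|lra]. apply Hm2. intros r [g [Hg ->]].
  apply Rnot_lt_le. intro; apply Hn. exists g. split; [assumption|lra].
Qed.
Lemma ut_max t w : (forall g, t < th g -> cle w (Xg g)) -> cle w (ut t).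
Proof.
  intros H i. unfold ut. destruct (completeness _ _ _) as [m [Hm1 Hm2]]; simpl.
  assert (m <= - w i); [|lra]. apply Hm2. intros r [g [Hg ->]]. specialize (H g Hg i). lra.
Qed.
Lemma ut_ge t g : th g <= t -> cle (Xg g) (ut t).
Proof. intros H. apply ut_max. intros h Hh. apply Xle. lra. Qed.

Lemma ut_near t F eps : 0 < eps -> exists b, t < b /\
  forall g, t < th g < b -> forall i, In i F -> Rabs (Xg g i - ut t i) < eps.
Proof.
  intros He. induction F as [|j F IH].
  - exists (t + 1). split; [lra|]. intros g _ i [].
  - destruct IH as [b1 [Hb1 H1]]. destruct (ut_approx t j eps He) as [gj [Hgj1 Hgj2]].
    exists (Rmin b1 (th gj)). split. unfold Rmin; destruct (Rle_dec b1 (th gj)); lra.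
    intros g [Hg1 Hg2] i [<-|Hi].
    + pose proof (Rmin_r b1 (th gj)). pose proof (Xle g gj ltac:(lra) j). pose proof (ut_lb t g j Hg1).
      apply Rabs_def1; lra.
    + apply H1; [|assumption]. pose proof (Rmin_l b1 (th gj)). lra.
Qed.

Lemma ut_MT t : MT (ut t).
Proof.
  intros F eps He. destruct (ut_near t F eps He) as [b [Hb H]].
  destruct (dense t b Hb) as [g Hg]. exists (Xg g). split. exists (fst g), (snd g); reflexivity.
  intros i Hi. apply H; assumption.
Qed.

Lemma ut_Ph t : Ph (ut t) t.
Proof. split; intros g Hg. apply ut_ge; lra. intros i; apply ut_lb; assumption. Qed.

Lemma ut_MR t : MR (ut t).
Proof.
  split. apply ut_MT. destruct small_seq as [gs Hgs].
  exists (fun n => fst (gs n)), (fun n => snd (gs n)). split.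
  - intros n. fold (th (gs n)). specialize (Hgs n). lra.
  - intros i eps He. destruct (ut_near t (i :: nil) eps He) as [b [Hb H]].
    destruct (archimed_cor1 (b - t) ltac:(lra)) as [N [HN1 HN2]]. exists N. intros n Hn.
    specialize (Hgs n). pose proof (inv_small N n HN2 Hn).
    set (k := fst (gs n)). set (l := snd (gs n)).
    pose proof (Ph_tau (ut t) t k l (ut_Ph t)) as P. pose proof (MT_tau (ut t) k l (ut_MT t)) as M.
    assert (Hth : th (k, l) = th (gs n)) by reflexivity. rewrite Hth in P.
    pose proof (Ph_lt _ _ _ _ (ut_MT t) M (ut_Ph t) P ltac:(lra) i) as Lo.
    destruct (dense (t + th (gs n)) b ltac:(lra)) as [h [Hh1 Hh2]].
    pose proof (Ph_lt _ _ _ _ M (MT_X h) P (Ph_X h) Hh1 i) as Up.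
    specialize (H h ltac:(lra) i ltac:(simpl; auto)). apply Rabs_def2 in H.
    unfold R_dist. apply Rabs_def1; lra.
Qed.

Definition Lset t i := fun r => exists g, th g < t /\ r = Xg g i.
Lemma Lset_bound t i : bound (Lset t i).
Proof.
  destruct (dense t (t + 1) ltac:(lra)) as [g0 [Hg0 _]]. exists (Xg g0 i).
  intros r [g [Hg ->]]. pose proof (Xle g g0 ltac:(lra) i). lra.
Qed.
Lemma Lset_ne t i : exists r, Lset t i r.
Proof. destruct (dense (t - 1) t ltac:(lra)) as [g [_ Hg]]. exists (Xg g i), g. split; [lra|reflexivity]. Qed.
Definition lt (t : R) : config d := fun i => proj1_sig (completeness _ (Lset_bound t i) (Lset_ne t i)).

Lemma lt_ub t g i : th g < t -> Xg g i <= lt t i.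
Proof.
  intros H. unfold lt. destruct (completeness _ _ _) as [m [Hm1 Hm2]]; simpl.
  apply Hm1; exists g; split; [assumption|reflexivity].
Qed.
Lemma lt_approx t i e : 0 < e -> exists g, th g < t /\ lt t i - e < Xg g i.
Proof.
  intros He. unfold lt. destruct (completeness _ _ _) as [m [Hm1 Hm2]]; simpl.
  apply NNPP; intro Hn. assert (m <= m - e); [|lra]. apply Hm2. intros r [g [Hg ->]].
  apply Rnot_lt_le. intro; apply Hn. exists g. split; [assumption|lra].
Qed.
Lemma lt_min t w : (forall g, th g < t -> cle (Xg g) w) -> cle (lt t) w.
Proof.
  intros H i. unfold lt. destruct (completeness _ _ _) as [m [Hm1 Hm2]]; simpl.
  apply Hm2. intros r [g [Hg ->]]. apply (H g Hg i).
Qed.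
Lemma lt_le t g : t <= th g -> cle (lt t) (Xg g).
Proof. intros H. apply lt_min. intros h Hh. apply Xle. lra. Qed.

Lemma lt_near t F eps : 0 < eps -> exists b, b < t /\
  forall g, b < th g < t -> forall i, In i F -> Rabs (Xg g i - lt t i) < eps.
Proof.
  intros He. induction F as [|j F IH].
  - exists (t - 1). split; [lra|]. intros g _ i [].
  - destruct IH as [b1 [Hb1 H1]]. destruct (lt_approx t j eps He) as [gj [Hgj1 Hgj2]].
    exists (Rmax b1 (th gj)). split. unfold Rmax; destruct (Rle_dec b1 (th gj)); lra.
    intros g [Hg1 Hg2] i [<-|Hi].
    + pose proof (Rmax_r b1 (th gj)). pose proof (Xle gj g ltac:(lra) j). pose proof (lt_ub t g j Hg2).
      apply Rabs_def1; lra.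
    + apply H1; [|assumption]. pose proof (Rmax_l b1 (th gj)). lra.
Qed.

Lemma lt_MT t : MT (lt t).
Proof.
  intros F eps He. destruct (lt_near t F eps He) as [b [Hb H]].
  destruct (dense b t Hb) as [g Hg]. exists (Xg g). split. exists (fst g), (snd g); reflexivity.
  intros i Hi. apply H; assumption.
Qed.

Lemma lt_Ph t : Ph (lt t) t.
Proof. split; intros g Hg. intros i; apply lt_ub; assumption. apply lt_le; lra. Qed.

Lemma lt_MR t : MR (lt t).
Proof.
  split. apply lt_MT. destruct small_seq as [gs Hgs].
  exists (fun n => fst (gz (-1) (gs n))), (fun n => snd (gz (-1) (gs n))). split.
  - intros n. fold (th (gz (-1) (gs n))). rewrite th_z. specialize (Hgs n). lra.
  - intros i eps He. destruct (lt_near t (i :: nil) eps He) as [b [Hb H]].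
    destruct (archimed_cor1 (t - b) ltac:(lra)) as [N [HN1 HN2]]. exists N. intros n Hn.
    specialize (Hgs n). pose proof (inv_small N n HN2 Hn).
    set (k := fst (gz (-1) (gs n))). set (l := snd (gz (-1) (gs n))).
    pose proof (Ph_tau (lt t) t k l (lt_Ph t)) as P. pose proof (MT_tau (lt t) k l (lt_MT t)) as M.
    assert (Hth : th (k, l) = - th (gs n)) by (change (th (k, l)) with (th (gz (-1) (gs n))); rewrite th_z; ring).
    rewrite Hth in P.
    pose proof (Ph_lt _ _ _ _ M (lt_MT t) P (lt_Ph t) ltac:(lra) i) as Up.
    destruct (dense b (t + - th (gs n)) ltac:(lra)) as [h [Hh1 Hh2]].
    pose proof (Ph_lt _ _ _ _ (MT_X h) M (Ph_X h) P Hh2 i) as Lo.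
    specialize (H h ltac:(lra) i ltac:(simpl; auto)). apply Rabs_def2 in H.
    unfold R_dist. apply Rabs_def1; lra.
Qed.


Lemma MR_closed : is_closed MR.
Proof.
  intros y Hy. apply NNPP; intro Hn.
  assert (Hcl : forall F eps, 0 < eps -> exists z, MR z /\ nbhd y F eps z).
  { intros F eps He. apply NNPP; intro H2. apply Hn. exists F, eps. split; [assumption|].
    intros z Hz Mz. apply H2. exists z; auto. }
  assert (My : MT y).
  { apply MT_closed. intros F eps He. destruct (Hcl F eps He) as [z [Mz Hz]]. exists z. split; [apply MR_MT|]; assumption. }
  destruct (Ph_exists y My) as [s Ps].
  assert (Hu : cle y (ut s)) by (apply ut_max; apply Ps).
  assert (Hl : cle (lt s) y) by (apply lt_min; apply Ps).
  destruct (classic (forall i, y i = ut s i)) as [E|E].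
  { apply Hy. replace y with (ut s) by (symmetry; apply functional_extensionality; exact E). apply ut_MR. }
  destruct (classic (forall i, y i = lt s i)) as [E'|E'].
  { apply Hy. replace y with (lt s) by (symmetry; apply functional_extensionality; exact E'). apply lt_MR. }
  apply not_all_ex_not in E. destruct E as [i Ei]. apply not_all_ex_not in E'. destruct E' as [j Ej].
  assert (Hi : y i < ut s i) by (specialize (Hu i); lra).
  assert (Hj : lt s j < y j) by (specialize (Hl j); lra).
  set (eps := Rmin (ut s i - y i) (y j - lt s j)).
  assert (He : 0 < eps) by (unfold eps, Rmin; destruct (Rle_dec (ut s i - y i) (y j - lt s j)); lra).
  assert (He1 : eps <= ut s i - y i) by apply Rmin_l.
  assert (He2 : eps <= y j - lt s j) by apply Rmin_r.
  destruct (Hcl (i :: j :: nil) eps He) as [z [Mz Hz]].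
  pose proof (Hz i ltac:(simpl; auto)) as Zi. pose proof (Hz j ltac:(simpl; auto)) as Zj.
  apply Rabs_def2 in Zi, Zj. pose proof (MR_MT z Mz) as MTz.
  assert (C1 : cle (lt s) z).
  { destruct (MT_comp z (lt s) MTz (lt_MT s)) as [C|C]; [|assumption]. specialize (C j). lra. }
  assert (C2 : cle z (ut s)).
  { destruct (MT_comp z (ut s) MTz (ut_MT s)) as [C|C]; [assumption|]. specialize (C i). lra. }
  destruct (Ph_exists z MTz) as [s' Ps'].
  pose proof (Ph_mono _ _ _ _ C1 (lt_Ph s) Ps'). pose proof (Ph_mono _ _ _ _ C2 Ps' (ut_Ph s)).
  assert (s' = s) by lra. subst s'.
  exact (NR (lt s) (ut s) z s j i (lt_MT s) (ut_MT s) MTz (lt_Ph s) (ut_Ph s) Ps' ltac:(lra) ltac:(lra) Mz).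
Qed.

Lemma MR_perfect : perfect MR.
Proof.
  split; [exact MR_closed|]. intros y Hy F eps He.
  pose proof Hy as [HyT [ks [ls [Hne Hcv]]]].
  destruct (cv_list (fun i n => tau (ks n) (ls n) y i) y F eps Hcv He) as [N HN].
  exists (tau (ks N) (ls N) y). split; [apply MR_tau; assumption|]. split.
  - destruct (Ph_exists y HyT) as [s Ps]. destruct (not_fixed y s (ks N) (ls N) Ps (Hne N)) as [i Hi].
    intro E. apply Hi. rewrite E. reflexivity.
  - intros i Hi. apply (HN N (le_n N) i Hi).
Qed.

Definition gap := exists a b s j, MT a /\ MT b /\ Ph a s /\ Ph b s /\ a j < b j.

Lemma SEP (C : config d -> Prop) y z a b s j : (forall w, C w -> MR w) -> connected C -> C y -> C z ->
  MT a -> MT b -> Ph a s -> Ph b s -> a j < b j -> cle y a -> cle b z -> False.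
Proof.
  intros HC Hconn Cy Cz Ma Mb Pa Pb Hab Hya Hbz. apply Hconn.
  set (c := (a j + b j) / 2).
  exists (fun w => w j < c), (fun w => c < w j). split; [|split; [|split; [|split; [|split]]]].
  - intros w Hw. exists (j :: nil), (c - w j). split; [lra|]. intros v Hv.
    specialize (Hv j ltac:(simpl; auto)). apply Rabs_def2 in Hv. lra.
  - intros w Hw. exists (j :: nil), (w j - c). split; [lra|]. intros v Hv.
    specialize (Hv j ltac:(simpl; auto)). apply Rabs_def2 in Hv. lra.
  - intros w Cw. destruct (Rtotal_order (w j) c) as [H|[H|H]]; [left; assumption| |right; assumption].
    exfalso. pose proof (HC w Cw) as Mw. pose proof (MR_MT w Mw) as MTw.
    assert (C1 : cle a w).
    { destruct (MT_comp w a MTw Ma) as [C'|C']; [|assumption]. specialize (C' j). unfold c in H. lra. }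
    assert (C2 : cle w b).
    { destruct (MT_comp w b MTw Mb) as [C'|C']; [assumption|]. specialize (C' j). unfold c in H. lra. }
    destruct (Ph_exists w MTw) as [s' Ps'].
    pose proof (Ph_mono _ _ _ _ C1 Pa Ps'). pose proof (Ph_mono _ _ _ _ C2 Ps' Pb).
    assert (s' = s) by lra. subst s'.
    apply (NR a b w s j j Ma Mb MTw Pa Pb Ps'); [unfold c in H; lra|unfold c in H; lra|assumption].
  - exists y. split; [assumption|]. specialize (Hya j). unfold c; lra.
  - exists z. split; [assumption|]. specialize (Hbz j). unfold c; lra.
  - intros w _ H1 H2. lra.
Qed.

Lemma TD : gap -> totally_disconnected MR.
Proof.
  intros [a [b [s0 [j0 [Ma [Mb [Pa [Pb Hab]]]]]]]] C HC Hconn.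
  assert (Key : forall y z i, C y -> C z -> cle y z -> y i < z i -> False).
  { intros y z i Cy Cz Hyz Hi.
    pose proof (MR_MT y (HC y Cy)) as My. pose proof (MR_MT z (HC z Cz)) as Mz.
    destruct (Ph_exists y My) as [sy Py]. destruct (Ph_exists z Mz) as [sz Pz].
    pose proof (Ph_mono _ _ _ _ Hyz Py Pz).
    destruct (Rle_lt_or_eq_dec _ _ H) as [Hl|Heq].
    - destruct (dense (sy - s0) (sz - s0) ltac:(lra)) as [g [Hg1 Hg2]].
      set (k := fst g). set (l := snd g).
      assert (Hth : th (k, l) = th g) by reflexivity.
      pose proof (Ph_tau a s0 k l Pa) as Pa'. pose proof (Ph_tau b s0 k l Pb) as Pb'. rewrite Hth in Pa', Pb'.
      pose proof (MT_tau a k l Ma) as Ma'. pose proof (MT_tau b k l Mb) as Mb'.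
      apply (SEP C y z (tau k l a) (tau k l b) (s0 + th g) (psub j0 k) HC Hconn Cy Cz Ma' Mb' Pa' Pb').
      + unfold tau. rewrite padd_psub. lra.
      + apply (Ph_lt _ _ _ _ My Ma' Py Pa'). lra.
      + apply (Ph_lt _ _ _ _ Mb' Mz Pb' Pz). lra.
    - subst sz. apply (SEP C y z y z sy i HC Hconn Cy Cz My Mz Py Pz Hi); intro; lra. }
  intros y z Cy Cz. apply functional_extensionality. intro i. apply NNPP; intro Hne.
  destruct (MT_comp y z (MR_MT y (HC y Cy)) (MR_MT z (HC z Cz))) as [H|H].
  - apply (Key y z i Cy Cz H). specialize (H i). lra.
  - apply (Key z y i Cz Cy H). specialize (H i). lra.
Qed.

Lemma CONN : ~ gap -> connected MR.
Proof.
  intros Hng.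
  assert (Uniq : forall a b s, MT a -> MT b -> Ph a s -> Ph b s -> a = b).
  { intros a b s Ma Mb Pa Pb. apply functional_extensionality; intro j.
    destruct (Rtotal_order (a j) (b j)) as [H|[H|H]]; [|assumption|];
    exfalso; apply Hng; [exists a, b, s, j|exists b, a, s, j]; auto. }
  assert (Eq : forall t, ut t = lt t) by (intro t; apply (Uniq _ _ t (ut_MT t) (lt_MT t) (ut_Ph t) (lt_Ph t))).
  assert (Cont : forall t F eps, 0 < eps -> exists dl, 0 < dl /\
            forall t', Rabs (t' - t) < dl -> nbhd (ut t) F eps (ut t')).
  { intros t F eps He. destruct (ut_near t F eps He) as [b [Hb Hbn]]. destruct (lt_near t F eps He) as [b' [Hb' Hbn']].
    exists (Rmin (b - t) (t - b')). split. unfold Rmin; destruct (Rle_dec (b - t) (t - b')); lra.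
    intros t' Ht' i Hi. pose proof (Rmin_l (b - t) (t - b')). pose proof (Rmin_r (b - t) (t - b')).
    apply Rabs_def2 in Ht'.
    destruct (Rtotal_order t t') as [Hl|[Heq|Hl]].
    - pose proof (Ph_lt _ _ _ _ (ut_MT t) (ut_MT t') (ut_Ph t) (ut_Ph t') Hl i).
      destruct (dense t' b ltac:(lra)) as [h [Hh1 Hh2]].
      pose proof (ut_lb t' h i Hh1). specialize (Hbn h ltac:(lra) i Hi). apply Rabs_def2 in Hbn.
      apply Rabs_def1; lra.
    - subst t'. rewrite Rminus_diag, Rabs_R0. assumption.
    - rewrite !Eq. pose proof (Ph_lt _ _ _ _ (lt_MT t') (lt_MT t) (lt_Ph t') (lt_Ph t) Hl i).
      destruct (dense b' t' ltac:(lra)) as [h [Hh1 Hh2]].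
      pose proof (lt_ub t' h i Hh2). specialize (Hbn' h ltac:(lra) i Hi). apply Rabs_def2 in Hbn'.
      apply Rabs_def1; lra. }
  assert (Gen : forall (U V : config d -> Prop) y z sy sz, is_open U -> is_open V ->
            (forall w, MR w -> U w \/ V w) -> (forall w, MR w -> U w -> V w -> False) ->
            MR y -> U y -> MR z -> V z -> Ph y sy -> Ph z sz -> sy < sz -> False).
  { intros U V y z sy sz HU HV Hcov Hdis My Uy Mz Vz Py Pz Hl.
    apply (interval_connected sy sz (fun t => U (ut t)) (fun t => V (ut t)) Hl).
    - intros t Ut. destruct (HU _ Ut) as [F [eps [He HF]]]. destruct (Cont t F eps He) as [dl [Hdl Hc]].
      exists dl; split; [assumption|]. intros t' Ht'. apply HF. apply Hc. assumption.
    - intros t Vt. destruct (HV _ Vt) as [F [eps [He HF]]]. destruct (Cont t F eps He) as [dl [Hdl Hc]].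
      exists dl; split; [assumption|]. intros t' Ht'. apply HF. apply Hc. assumption.
    - intros t _. apply Hcov. apply ut_MR.
    - intros t _. apply Hdis. apply ut_MR.
    - simpl. rewrite <- (Uniq y (ut sy) sy (MR_MT y My) (ut_MT sy) Py (ut_Ph sy)). assumption.
    - simpl. rewrite <- (Uniq z (ut sz) sz (MR_MT z Mz) (ut_MT sz) Pz (ut_Ph sz)). assumption. }
  intros [U [V [HU [HV [Hcov [[y [My Uy]] [[z [Mz Vz]] Hdis]]]]]]].
  destruct (Ph_exists y (MR_MT y My)) as [sy Py]. destruct (Ph_exists z (MR_MT z Mz)) as [sz Pz].
  destruct (Rtotal_order sy sz) as [Hl|[Heq|Hl]].
  - exact (Gen U V y z sy sz HU HV Hcov Hdis My Uy Mz Vz Py Pz Hl).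
  - subst sz. pose proof (Uniq y z sy (MR_MT y My) (MR_MT z Mz) Py Pz). subst z. exact (Hdis y My Uy Vz).
  - refine (Gen V U z y sz sy HV HU _ _ Mz Vz My Uy Pz Py Hl).
    + intros w Mw. destruct (Hcov w Mw); auto.
    + intros w Mw H1 H2. exact (Hdis w Mw H2 H1).
Qed.

Lemma final : connected MR \/ cantor_set MR.
Proof.
  destruct (classic gap) as [Hg|Hg].
  - right. split; [exact MR_closed|split; [exact MR_perfect|exact (TD Hg)]].
  - left. exact (CONN Hg).
Qed.

End Main.


Theorem mainTheorem9 (d : nat) (r : R) (S : pt d -> config d -> R)
  (hA : exists D1 D2, condA r S D1 D2 /\ condD D2 /\ condE D2)
  (hB : condB S) (hC : condC S)
  (omega : nat -> R) (homega : not_in_Qd d omega)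
  (x : config d)
  (hbirk : birkhoff x) (hmin : global_minimizer r S x)
  (hrot : has_rotation_vector x omega)
  (hsym : forall k l, dot omega k + IZR l = 0 -> forall i, tau k l x i = x i) :
  connected (Mrec omega x) \/ cantor_set (Mrec omega x).
Proof.
  exact (final d x omega hbirk hrot hsym homega).
Qed.
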